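(* Let $D$ and $H$ be finite sets of doctors and hospitals with $|D|\ge 2$ and $|H|\ge 2$. An interview arrangement $(\iota,\kappa)$ is globally adequate (i.e., adequate at every preference profile $P$) if and only if either (1) $\kappa_d=1$ for every $d\in D$ and $\iota_h=1$ for every $h\in H$, or (2) $\kappa_d\ge\min\{|D|,|H|\}$ for every $d\in D$ and $\iota_h\ge\min\{|D|,|H|\}$ for every $h\in H$.
   Context: Each $h\in H$ has a strict preference $P_h$ over $D\cup\{h\}$ and each $d\in D$ a strict preference $P_d$ over $H\cup\{d\}$ (ranking below oneself means unacceptable); a profile $P$ collects these, and $\mathcal P$ is the set of all profiles. A matching is $\mu:H\cup D\to H\cup D$ with $\mu(h)\in D\cup\{h\}$, $\mu(d)\in H\cup\{d\}$, and $\mu(d)=h$ iff $\mu(h)=d$; it is stable if there is no pair $(d,h)$ with $h\mathrel{P_d}\mu(d)$ and $d\mathrel{P_h}\mu(h)$. An interview arrangement is $(\iota,\kappa)$ with $\iota_h\in\mathbb N$ the interview capacity of each $h\in H$ and $\kappa_d\in\mathbb N$ that of each $d\in D$. An interview matching is a many-to-many matching $\nu$ ($\nu(d)\subseteq H$, $\nu(h)\subseteq D$, $h\in\nu(d)$ iff $d\in\nu(h)$) with $|\nu(d)|\le\kappa_d$, $|\nu(h)|\le\iota_h$. The $(\iota,\kappa)$-matching at $P$ is obtained in two steps. Step 1: $\nu$ is the hospital-optimal pairwise stable interview matching, computed by hospital-proposing deferred acceptance in which each agent's choice from a set of proposals is its acceptable partners in that set if at most its capacity many, otherwise its capacity-many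 best according to its preference. Step 2: the final matching is the outcome of doctor-proposing deferred acceptance with each agent's preference restricted to $\nu$ (agent $i$ ranks only agents in $\nu(i)$, in the order of $P_i$ and only if acceptable; all others unacceptable). $(\iota,\kappa)$ is adequate at $P$ if the $(\iota,\kappa)$-matching at $P$ is stable with respect to $P$, and globally adequate if adequate at every $P\in\mathcal P$. *)

(* Defs.v *)
From mathcomp Require Import all_boot.
Set Implicit Arguments. Unset Strict Implicit. Unset Printing Implicit Defensive.

(* A strict preference of hospital h over D ∪ {h} is encoded by an injective
   rank function on [option D] ([None] = h itself); smaller rank = better.
   Likewise for doctors over H ∪ {d}. *)
Record profile (D H : finType) := Profile {
  rkH : H -> option D -> nat;
  rkD : D -> option H -> nat;
  rkH_inj : forall h, injective (rkH h);
  rkD_inj : forall d, injective (rkD d)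
}.

Section Prefs.
Variables (D H : finType) (P : profile D H).
Definition prefH (h : H) (x y : option D) : bool := rkH P h x < rkH P h y.
Definition prefD (d : D) (x y : option H) : bool := rkD P d x < rkD P d y.
Definition accH (h : H) (d : D) : bool := prefH h (Some d) None.
Definition accD (d : D) (h : H) : bool := prefD d (Some h) None.
End Prefs.

(* State: the set R of pairs (a,b) where b has
   rejected a.  The rejection set only grows, so after #|A|*#|B|+1 rounds the
   procedure has stopped; the outcome is the set of held proposals. *)
Section DA.
Variables (A B : finType)
  (rA : A -> B -> nat) (accA : A -> B -> bool) (capA : A -> nat)
  (rB : B -> A -> nat) (accB : B -> A -> bool) (capB : B -> nat).

Definition best (k : nat) (T : Type) (r : T -> nat) (s : seq T) : seq T :=
  take k (sort (fun x y => r x <= r y) s).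

Definition da_propose (R : {set A * B}) (a : A) : seq B :=
  best (capA a) (rA a) [seq b <- enum B | accA a b && ((a, b) \notin R)].

Definition da_hold (R : {set A * B}) (b : B) : seq A :=
  best (capB b) (rB b) [seq a <- enum A | (b \in da_propose R a) && accB b a].

Definition da_step (R : {set A * B}) : {set A * B} :=
  R :|: [set p | (p.2 \in da_propose R p.1) && (p.1 \notin da_hold R p.2)].

Definition da_rejections : {set A * B} := iter (#|A| * #|B|).+1 da_step set0.

Definition da_outcome (b : B) : seq A := da_hold da_rejections b.
End DA.

Section Arrangement.
Variables (D H : finType) (iota : H -> nat) (kappa : D -> nat) (P : profile D H).

(* Step 1: hospital-proposing DA; nu d = interview partners of doctor d. *)
Definition interview_nu (d : D) : seq H :=
  da_outcome (fun h => rkH P h \o Some) (accH P) iota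
             (fun d => rkD P d \o Some) (accD P) kappa d.
Definition interview_nuH (h : H) : seq D :=
  [seq d <- enum D | h \in interview_nu d].

(* Step 2: doctor-proposing DA with preferences restricted to nu. *)
Definition accD_nu (d : D) (h : H) : bool := (h \in interview_nu d) && accD P d h.
Definition accH_nu (h : H) (d : D) : bool := (d \in interview_nuH h) && accH P h d.

Definition step2_held (h : H) : seq D :=
  da_outcome (fun d => rkD P d \o Some) accD_nu (fun _ => 1)
             (fun h => rkH P h \o Some) accH_nu (fun _ => 1) h.

(* final matching: None means matched to oneself *)
Definition final_muH (h : H) : option D := ohead (step2_held h).
Definition final_muD (d : D) : option H := [pick h | d \in step2_held h].
End Arrangement.

Definition stable (D H : finType) (P : profile D H)
  (muD : D -> option H) (muH : H -> option D) : Prop :=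
  ~ exists (d : D) (h : H), prefD P d (Some h) (muD d) && prefH P h (Some d) (muH h).

Definition adequate (D H : finType) (iota : H -> nat) (kappa : D -> nat)
  (P : profile D H) : Prop :=
  stable P (final_muD iota kappa P) (final_muH iota kappa P).

Definition globally_adequate (D H : finType) (iota : H -> nat) (kappa : D -> nat)
  : Prop := forall P : profile D H, adequate iota kappa P.

(* Main.v *)
Require Import Defs.
From mathcomp Require Import all_boot.
From mathcomp Require Import zify.
Set Implicit Arguments. Unset Strict Implicit. Unset Printing Implicit Defensive.


Section Best.
Variables (T : eqType) (r : T -> nat).
Hypothesis r_inj : injective r.

Local Notation le := (fun x y : T => r x <= r y).
Lemma le_total : total le. Proof. by move=> x y; rewrite leq_total. Qed.
Lemma le_trans : transitive le. Proof. by move=> x y z; apply: leq_trans. Qed.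

Lemma index_sorted (l : seq T) x : sorted le l -> uniq l -> x \in l ->
  index x l = count (fun y => r y < r x) l.
Proof.
elim: l => [//|a l IH] /= Hs /andP[al ul]; rewrite in_cons.
have Hmin : all (le a) l := order_path_min le_trans Hs.
have Hs' : sorted le l by move: Hs; case: l {IH al ul Hmin} => //= b l /andP[].
case: (eqVneq a x) => [<- _|ne /= xl].
  rewrite ?eqxx ltnn add0n; symmetry; apply/eqP; rewrite -leqn0 leqNgt -has_count.
  apply/hasP => -[y yl]; move/allP: Hmin => /(_ y yl) ay ya.
  by move: (leq_ltn_trans ay ya); rewrite ltnn.
rewrite ?(negbTE ne) IH // -add1n; congr (_ + _).
move/allP: Hmin => /(_ x xl); rewrite leq_eqVlt => /orP[/eqP e|->//].
by move: ne; rewrite (r_inj e) eqxx.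
Qed.

Lemma mem_best k s x : uniq s ->
  (x \in best k r s) = (x \in s) && (count (fun y => r y < r x) s < k).
Proof.
move=> us; rewrite /best.
have ps := perm_sort le s.
have us' : uniq (sort le s) by rewrite sort_uniq.
have ms : (x \in sort le s) = (x \in s) by rewrite mem_sort.
case xs: (x \in s); last first.
  by apply/negbTE; apply: contraFN xs => /mem_take; rewrite ms.
rewrite in_take ?ms // index_sorted ?ms //; last exact: (sort_sorted le_total).
by rewrite /= (permP (permEl (perm_sort le s))).
Qed.

Lemma uniq_best k s : uniq s -> uniq (best k r s).
Proof. by move=> us; rewrite /best take_uniq // sort_uniq. Qed.

Lemma size_best k s : size (best k r s) = minn k (size s).
Proof. by rewrite /best size_take_min size_sort. Qed.

Lemma best_all_better k s a : uniq s -> k <= count (fun y => r y < r a) s ->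
  count (fun y => r y < r a) (best k r s) = k.
Proof.
move=> us hk.
have hall : all (fun y => r y < r a) (best k r s).
  apply/allP => x; rewrite mem_best // => /andP[xs cx].
  rewrite ltnNge; apply/negP => ax.
  have : count (fun y => r y < r a) s <= count (fun y => r y < r x) s.
    by apply: sub_count => y /= ya; apply: leq_trans ya ax.
  by move=> h; move: (leq_trans hk h); rewrite leqNgt cx.
move/allP: hall => hall.
have -> : count (fun y => r y < r a) (best k r s) = size (best k r s).
  by apply/eqP; rewrite -all_count; apply/allP.
rewrite size_best; apply/minn_idPl.
by apply: leq_trans hk (count_size _ _).
Qed.

Lemma best_min k s x : 0 < k -> x \in s -> exists2 y, y \in best k r s & r y <= r x.
Proof.
move=> k0 xs; rewrite /best.
have : x \in sort le s by rewrite mem_sort.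
have := sort_sorted le_total s.
case: (sort le s) => [//|y l] /= Hp.
have Hmin : all (le y) l := order_path_min le_trans Hp.
move=> xin; exists y; first by case: k k0 => //= k _; rewrite inE eqxx.
move: xin; rewrite in_cons => /orP[/eqP->//|xl].
by move/allP: Hmin => /(_ x xl).
Qed.

Lemma size_best_le k s : size (best k r s) <= k.
Proof. by rewrite size_best geq_minl. Qed.
End Best.

Lemma size1_eq (T : eqType) (s : seq T) x y : size s <= 1 -> x \in s -> y \in s -> x = y.
Proof. by case: s => [//|a [|//]] _; rewrite !inE => /eqP-> /eqP->. Qed.


Section DAth.
Variables (A B : finType)
  (rA : A -> B -> nat) (accA : A -> B -> bool) (capA : A -> nat)
  (rB : B -> A -> nat) (accB : B -> A -> bool) (capB : B -> nat).
Hypothesis rA_inj : forall a, injective (rA a).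
Hypothesis rB_inj : forall b, injective (rB b).

Local Notation prop := (da_propose rA accA capA).
Local Notation hold := (da_hold rA accA capA rB accB capB).
Local Notation step := (da_step rA accA capA rB accB capB).
Local Notation Rf := (da_rejections rA accA capA rB accB capB).

Definition LA (R : {set A * B}) a := [seq b <- enum B | accA a b && ((a, b) \notin R)].
Definition LB (R : {set A * B}) b := [seq a <- enum A | (b \in prop R a) && accB b a].

Lemma uniq_LA (R : {set A * B}) a : uniq (LA R a). Proof. by rewrite filter_uniq ?enum_uniq. Qed.
Lemma uniq_LB (R : {set A * B}) b : uniq (LB R b). Proof. by rewrite filter_uniq ?enum_uniq. Qed.

Lemma mem_prop (R : {set A * B}) a b : (b \in prop R a) =
  [&& accA a b, (a, b) \notin R & count (fun y => rA a y < rA a b) (LA R a) < capA a].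
Proof.
rewrite /da_propose mem_best ?uniq_LA // -/(LA R a) /LA mem_filter mem_enum andbT.
by rewrite andbA.
Qed.

Lemma mem_hold (R : {set A * B}) a b : (a \in hold R b) =
  [&& b \in prop R a, accB b a & count (fun y => rB b y < rB b a) (LB R b) < capB b].
Proof.
rewrite /da_hold mem_best ?uniq_LB // -/(LB R b) /LB mem_filter mem_enum andbT.
by rewrite andbA.
Qed.

Lemma uniq_hold (R : {set A * B}) b : uniq (hold R b). Proof. by apply: uniq_best; rewrite ?uniq_LB. Qed.
Lemma uniq_prop (R : {set A * B}) a : uniq (prop R a). Proof. by apply: uniq_best; rewrite ?uniq_LA. Qed.
Lemma size_hold (R : {set A * B}) b : size (hold R b) <= capB b. Proof. exact: size_best_le. Qed.
Lemma size_prop (R : {set A * B}) a : size (prop R a) <= capA a. Proof. exact: size_best_le. Qed.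
Lemma hold_LB (R : {set A * B}) b : hold R b = best (capB b) (rB b) (LB R b). Proof. by []. Qed.
Lemma prop_LA (R : {set A * B}) a : prop R a = best (capA a) (rA a) (LA R a). Proof. by []. Qed.

Lemma mem_step (R : {set A * B}) p : (p \in step R) = (p \in R) || ((p.2 \in prop R p.1) && (p.1 \notin hold R p.2)).
Proof. by rewrite /da_step inE inE. Qed.

Lemma sub_step (R : {set A * B}) : R \subset step R.
Proof. by apply/subsetP => p pR; rewrite mem_step pR. Qed.

Lemma step_fix : step Rf = Rf.
Proof.
have H : forall n, n <= #|iter n step set0| \/ step (iter n step set0) = iter n step set0.
  elim=> [|n [IH|IH]]; [by left| |by right; rewrite /= IH].
  case: (eqVneq (step (iter n step set0)) (iter n step set0)) => [e|ne]; first by right; rewrite /= e.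
  left; apply: leq_ltn_trans IH _; rewrite /=; apply: proper_card.
  by rewrite properEneq eq_sym ne sub_step.
rewrite /da_rejections; case: (H (#|A| * #|B|).+1) => [|//].
move=> h; have := leq_trans h (max_card _); rewrite card_prod ltnn //.
Qed.

Lemma fix_prop (R : {set A * B}) : step R = R -> forall a b, (b \in prop R a) = (a \in hold R b).
Proof.
move=> e a b; apply/idP/idP; last by rewrite mem_hold => /andP[].
move=> bp; apply/negPn/negP => nh.
have : (a, b) \in step R by rewrite mem_step /= bp nh orbT.
by rewrite e => abR; move: bp; rewrite mem_prop abR andbF.
Qed.

Definition Good (R : {set A * B}) a b := capB b <= count (fun y => rB b y < rB b a) (hold R b).

Lemma new_good (R : {set A * B}) a b : b \in prop R a -> a \notin hold R b -> accB b a -> Good R a b.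
Proof.
move=> bp nh ac; rewrite /Good hold_LB best_all_better ?uniq_LB //.
by move: nh; rewrite mem_hold bp ac /= -leqNgt.
Qed.

Lemma hold_in_step (R : {set A * B}) a b : a \in hold R b -> (b \in prop (step R) a) && accB b a.
Proof.
move=> ah; move: (ah); rewrite mem_hold => /and3P[bp ac _]; rewrite ac andbT.
move: (bp); rewrite !mem_prop => /and3P[acA nR cnt]; rewrite acA /=.
rewrite mem_step /= negb_or nR /= ah andbF /=.
apply: leq_ltn_trans cnt; rewrite /LA !count_filter; apply: sub_count => y /= /andP[/and3P[c1 c2 nst] yB].
by rewrite c1 c2 yB /= andbT; apply: contra nst => yR; rewrite mem_step yR.
Qed.

Lemma good_step (R : {set A * B}) a b : Good R a b -> Good (step R) a b.
Proof.
rewrite /Good => g; rewrite hold_LB best_all_better ?uniq_LB //.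
apply: leq_trans g _; rewrite -!size_filter; apply: uniq_leq_size.
  by rewrite filter_uniq ?uniq_hold.
move=> y; rewrite !mem_filter => /andP[-> yh] /=.
by rewrite hold_in_step // -enumT mem_enum.
Qed.

Definition Inv (R : {set A * B}) := forall a b, (a, b) \in R -> accB b a -> Good R a b.

Lemma inv_step (R : {set A * B}) : Inv R -> Inv (step R).
Proof.
move=> I a b; rewrite mem_step /= => /orP[abR|/andP[bp nh]] ac.
  by apply: good_step; apply: I.
by apply: good_step; apply: new_good.
Qed.

Lemma inv_Rf : Inv Rf.
Proof.
rewrite /da_rejections; elim: (_.+1) => [|n IH] /=; last exact: inv_step.
by move=> a b; rewrite inE.
Qed.

Lemma fixRf a b : (b \in prop Rf a) = (a \in hold Rf b).
Proof. by rewrite (fix_prop step_fix). Qed.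

End DAth.


Section Arr.
Variables (D H : finType) (iota : H -> nat) (kappa : D -> nat) (P : profile D H).

Definition rH1 := fun h => rkH P h \o Some.
Definition rD1 := fun d => rkD P d \o Some.
Lemma rH1_inj h : injective (rH1 h).
Proof. by move=> x y /rkH_inj [->]. Qed.
Lemma rD1_inj d : injective (rD1 d).
Proof. by move=> x y /rkD_inj [->]. Qed.

Definition R1 := da_rejections rH1 (accH P) iota rD1 (accD P) kappa.
Definition prop1 h := da_propose rH1 (accH P) iota R1 h.
Local Notation nu := (interview_nu iota kappa P).
Lemma nuE d : nu d = da_hold rH1 (accH P) iota rD1 (accD P) kappa R1 d.
Proof. by []. Qed.

Definition R2 := da_rejections rD1 (accD_nu iota kappa P) (fun _ => 1) rH1 (accH_nu iota kappa P) (fun _ => 1).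
Definition prop2 d := da_propose rD1 (accD_nu iota kappa P) (fun _ => 1) R2 d.
Local Notation held2 := (step2_held iota kappa P).
Lemma held2E h : held2 h = da_hold rD1 (accD_nu iota kappa P) (fun _ => 1) rH1 (accH_nu iota kappa P) (fun _ => 1) R2 h.
Proof. by []. Qed.
Local Notation muD := (final_muD iota kappa P).
Local Notation muH := (final_muH iota kappa P).

Lemma nu_prop1 d h : (h \in nu d) = (d \in prop1 h).
Proof. by rewrite nuE /prop1 (fixRf _ _ _ _ rH1_inj rD1_inj). Qed.

Lemma prop1_acc h d : d \in prop1 h -> accH P h d.
Proof. by rewrite /prop1 (mem_prop _ _ rH1_inj) => /andP[]. Qed.

Lemma nu_acc d h : h \in nu d -> accD P d h /\ accH P h d.
Proof.
move=> hn; split; last by apply: prop1_acc; rewrite -nu_prop1.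
by move: hn; rewrite nuE (mem_hold _ _ _ _ _ rD1_inj) => /and3P[].
Qed.

Lemma uniq_nu d : uniq (nu d). Proof. by rewrite nuE uniq_hold. Qed.
Lemma size_nu d : size (nu d) <= kappa d. Proof. by rewrite nuE size_hold. Qed.
Lemma size_prop1 h : size (prop1 h) <= iota h. Proof. exact: size_prop. Qed.
Lemma uniq_prop1 h : uniq (prop1 h). Proof. exact: uniq_prop. Qed.

Lemma inv1 h d : (h, d) \in R1 -> accD P d h ->
  kappa d <= count (fun y => rkD P d (Some y) < rkD P d (Some h)) (nu d).
Proof. by move=> hR ac; have := inv_Rf rH1_inj rD1_inj hR ac. Qed.

Lemma mem_prop1 h d : (d \in prop1 h) =
  [&& accH P h d, (h, d) \notin R1 &
      count (fun y => rkH P h (Some y) < rkH P h (Some d)) (LA (accH P) R1 h) < iota h].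
Proof. by rewrite /prop1 (mem_prop _ _ rH1_inj). Qed.

Lemma prop1_best h : prop1 h = best (iota h) (rH1 h) (LA (accH P) R1 h).
Proof. by []. Qed.

Lemma mem_LA1 h d : (d \in LA (accH P) R1 h) = accH P h d && ((h, d) \notin R1).
Proof. by rewrite /LA mem_filter mem_enum andbT. Qed.

Lemma uniq_LA1 h : uniq (LA (accH P) R1 h). Proof. exact: uniq_LA. Qed.

Lemma held2_prop2 d h : (d \in held2 h) = (h \in prop2 d).
Proof. by rewrite held2E /prop2 (fixRf _ _ _ _ rD1_inj rH1_inj). Qed.

Lemma prop2_nu d h : h \in prop2 d -> h \in nu d.
Proof. by rewrite /prop2 (mem_prop _ _ rD1_inj) /accD_nu => /and3P[/andP[]]. Qed.

Lemma size_prop2 d : size (prop2 d) <= 1. Proof. exact: size_prop. Qed.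
Lemma size_held2 h : size (held2 h) <= 1. Proof. by rewrite held2E size_hold. Qed.

Lemma muD_held d h : (muD d == Some h) = (d \in held2 h).
Proof.
rewrite /final_muD; case: pickP => [h' dh'|none] /=.
  apply/eqP/idP => [[<-]//|dh]; congr Some.
  rewrite !held2_prop2 in dh dh'; exact: size1_eq (size_prop2 d) dh' dh.
by rewrite none.
Qed.

Lemma muH_held h d : (muH h == Some d) = (d \in held2 h).
Proof.
rewrite /final_muH; have := size_held2 h.
by case: (held2 h) => [|x [|//]] //= _; rewrite inE eq_sym.
Qed.

Lemma muD_nu d h : muD d = Some h -> h \in nu d.
Proof. by move/eqP; rewrite muD_held held2_prop2 => /prop2_nu. Qed.

Lemma muH_nu h d : muH h = Some d -> h \in nu d.
Proof. by move/eqP; rewrite muH_held held2_prop2 => /prop2_nu. Qed.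

Lemma pref_accD d h : prefD P d (Some h) (muD d) -> accD P d h.
Proof.
rewrite /accD /prefD; case e: (muD d) => [h'|//] lt.
have [a _] := nu_acc (muD_nu e); exact: ltn_trans lt a.
Qed.

Lemma pref_accH h d : prefH P h (Some d) (muH h) -> accH P h d.
Proof.
rewrite /accH /prefH; case e: (muH h) => [d'|//] lt.
have [_ a] := nu_acc (muH_nu e); exact: ltn_trans lt a.
Qed.

Lemma S2 d h : h \in nu d ->
  (exists d', muH h = Some d' /\ rkH P h (Some d') < rkH P h (Some d)) \/
  (exists h0, muD d = Some h0 /\ rkD P d (Some h0) <= rkD P d (Some h)).
Proof.
move=> hn; have [aD aH] := nu_acc hn.
have acn : accH_nu iota kappa P h d.
  by rewrite /accH_nu aH andbT /interview_nuH mem_filter mem_enum hn.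
have acd : accD_nu iota kappa P d h by rewrite /accD_nu hn aD.
case: (boolP ((d, h) \in R2)) => hR.
  left; have := inv_Rf rD1_inj rH1_inj hR acn; rewrite /Good -held2E.
  rewrite -has_count => /hasP [d' d'h lt]; exists d'; split => //.
  by apply/eqP; rewrite muH_held.
right.
have hL : h \in LA (accD_nu iota kappa P) R2 d by rewrite /LA mem_filter mem_enum acd hR.
have [y yp le] := @best_min _ (rD1 d) 1 _ h isT hL.
exists y; split => //; apply/eqP; rewrite muD_held held2_prop2; exact: yp.
Qed.

End Arr.


Lemma count_lt_size (T : eqType) (p : pred T) s x : x \in s -> ~~ p x -> count p s < size s.
Proof.
move=> xs npx; rewrite -(count_predC p s) -{1}[count p s]addn0 ltn_add2l -has_count.
by apply/hasP; exists x.
Qed.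

Lemma inj_count (T U : finType) (s : seq T) (f : T -> option U) (u0 : U) :
  uniq s -> (forall x, x \in s -> exists y, f x = Some y /\ y != u0) ->
  (forall x y z, x \in s -> y \in s -> f x = Some z -> f y = Some z -> x = y) -> size s < #|U|.
Proof.
move=> us hf hi.
have ut : uniq (map f s).
  rewrite map_inj_in_uniq // => x y xs ys e; have [z [ez _]] := hf x xs.
  by apply: (hi x y z) => //; rewrite -e.
have sub : {subset map f s <= map Some (enum (predC1 u0))}.
  move=> z /mapP [x xs ->]; have [y [-> yn]] := hf x xs.
  by apply: map_f; rewrite mem_enum inE.
have := uniq_leq_size ut sub; rewrite !size_map -cardE cardC1.
have : 0 < #|U| by apply/card_gt0P; exists u0.
by case: #|U| => [//|n] _ /= h; rewrite ltnS.
Qed.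

Section Suff.
Variables (D H : finType) (iota : H -> nat) (kappa : D -> nat) (P : profile D H).
Local Notation nu := (interview_nu iota kappa P).
Local Notation held2 := (step2_held iota kappa P).
Local Notation muD := (final_muD iota kappa P).
Local Notation muH := (final_muH iota kappa P).
Local Notation R1 := (R1 iota kappa P).
Local Notation prop1 := (prop1 iota kappa P).
Local Notation prop2 := (prop2 iota kappa P).

Lemma block_not_nu d h : prefD P d (Some h) (muD d) -> prefH P h (Some d) (muH h) -> h \notin nu d.
Proof.
rewrite /prefD /prefH => pd ph; apply/negP => hn.
case: (S2 hn) => [[d' [e lt]]|[h0 [e le]]].
  by move: ph; rewrite e => /(ltn_trans lt); rewrite ltnn.
by move: pd; rewrite e => /(leq_ltn_trans le); rewrite ltnn.
Qed.

Lemma muH_inj x y z : muH x = Some z -> muH y = Some z -> x = y.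
Proof.
move=> /eqP; rewrite muH_held held2_prop2 => xz /eqP; rewrite muH_held held2_prop2 => yz.
exact: size1_eq (size_prop2 _ _ _ _) xz yz.
Qed.

Lemma muD_inj x y z : muD x = Some z -> muD y = Some z -> x = y.
Proof.
move=> /eqP; rewrite muD_held => xz /eqP; rewrite muD_held => yz.
exact: size1_eq (size_held2 _ _ _ _) xz yz.
Qed.

Lemma size_LA1 h : size (LA (accH P) R1 h) <= #|D|.
Proof. by rewrite /LA size_filter cardT; apply: count_size. Qed.

Lemma suff_a : (forall d, #|D| <= kappa d) -> (forall h, #|D| <= iota h) -> adequate iota kappa P.
Proof.
move=> hk hi [d [h /andP[pd ph]]].
have hn := block_not_nu pd ph.
have aD := pref_accD pd; have aH := pref_accH ph.
have hR : (h, d) \in R1.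
  apply/negPn/negP => nR; move/negP: hn; apply.
  rewrite nu_prop1 mem_prop1 aH nR /=.
  have dL : d \in LA (accH P) R1 h by rewrite mem_LA1 aH nR.
  have := count_lt_size (p := fun y => rkH P h (Some y) < rkH P h (Some d)) dL.
  rewrite /= ltnn => /(_ isT) lt; exact: leq_trans lt (leq_trans (size_LA1 h) (hi h)).
have c := inv1 hR aD.
set s := filter (fun y => rkD P d (Some y) < rkD P d (Some h)) (nu d).
have : size s < #|D|.
  apply: (@inj_count _ _ s muH d); first by rewrite filter_uniq ?uniq_nu.
    move=> x; rewrite mem_filter => /andP[lt xn].
    case: (S2 xn) => [[d' [e lt']]|[h0 [e le]]].
      exists d'; split => //; apply/negP => /eqP ed; move: lt'; rewrite ed ltnn //.
    move: pd; rewrite /prefD e => lt2.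
    by move: (leq_ltn_trans le (ltn_trans lt lt2)); rewrite ltnn.
  by move=> x y z _ _; apply: muH_inj.
by rewrite size_filter ltnNge (leq_trans (hk d) c).
Qed.

Lemma prop1_count h d : d \in LA (accH P) R1 h -> d \notin prop1 h ->
  count (fun y => rkH P h (Some y) < rkH P h (Some d)) (prop1 h) = iota h.
Proof.
move=> dL np; rewrite prop1_best.
apply: (best_all_better (@rH1_inj _ _ P h)); first exact: uniq_LA1.
by move: np dL; rewrite mem_prop1 mem_LA1 => np /andP[a nR]; move: np; rewrite a nR /= -leqNgt.
Qed.

Lemma suff_b : (forall d, #|H| <= kappa d) -> (forall h, #|H| <= iota h) -> adequate iota kappa P.
Proof.
move=> hk hi [d [h /andP[pd ph]]].
have hn := block_not_nu pd ph.
have aD := pref_accD pd; have aH := pref_accH ph.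
have nR : (h, d) \notin R1.
  apply/negP => hR; have c := inv1 hR aD.
  set s := filter (fun y => rkD P d (Some y) < rkD P d (Some h)) (nu d).
  have us : uniq (h :: s) by rewrite /= mem_filter (negbTE hn) andbF filter_uniq ?uniq_nu.
  have := max_card (mem (h :: s)); rewrite (card_uniqP us) /= => sz.
  by move: (leq_trans (hk d) c); rewrite -size_filter -/s leqNgt sz.
have dL : d \in LA (accH P) R1 h by rewrite mem_LA1 aH nR.
have np : d \notin prop1 h by rewrite -nu_prop1.
have c := prop1_count dL np.
set s := filter (fun y => rkH P h (Some y) < rkH P h (Some d)) (prop1 h).
have : size s < #|H|.
  apply: (@inj_count _ _ s muD h); first by rewrite filter_uniq ?uniq_prop1.
    move=> x; rewrite mem_filter => /andP[lt xp].
    have xn : h \in nu x by rewrite nu_prop1.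
    case: (S2 xn) => [[d' [e lt']]|[h0 [e le]]].
      move: ph; rewrite /prefH e => lt2.
      by move: (ltn_trans lt' (ltn_trans lt lt2)); rewrite ltnn.
    exists h0; split => //; apply/negP => /eqP eh; move: e; rewrite eh => /eqP.
    rewrite muD_held -muH_held => /eqP e.
    by move: ph; rewrite /prefH e => /(ltn_trans lt); rewrite ltnn.
  by move=> x y z _ _; apply: muD_inj.
by rewrite size_filter c ltnNge hi.
Qed.

Lemma suff_1 : (forall d, kappa d = 1) -> (forall h, iota h = 1) -> adequate iota kappa P.
Proof.
move=> hk hi [d [h /andP[pd ph]]].
have hn := block_not_nu pd ph.
have aD := pref_accD pd; have aH := pref_accH ph.
case: (boolP ((h, d) \in R1)) => hR.
  have := inv1 hR aD; rewrite hk -has_count => /hasP [h1 h1n lt].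
  case: (S2 h1n) => [[d' [e lt']]|[h0 [e le]]].
    have d'n := muH_nu e.
    rewrite nu_prop1 in h1n; rewrite nu_prop1 in d'n.
    have := size_prop1 iota kappa P h1; rewrite hi => sz.
    by move: lt'; rewrite (size1_eq sz h1n d'n) ltnn.
  move: pd; rewrite /prefD e => lt2.
  by move: (leq_ltn_trans le (ltn_trans lt lt2)); rewrite ltnn.
have dL : d \in LA (accH P) R1 h by rewrite mem_LA1 aH hR.
have np : d \notin prop1 h by rewrite -nu_prop1.
have := prop1_count dL np; rewrite hi => c.
have : 0 < count (fun y => rkH P h (Some y) < rkH P h (Some d)) (prop1 h) by rewrite c.
rewrite -has_count => /hasP [d1 d1p lt].
have hn1 : h \in nu d1 by rewrite nu_prop1.
case: (S2 hn1) => [[x [e lt']]|[h0 [e le]]].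
  move: ph; rewrite /prefH e => lt2.
  by move: (ltn_trans lt' (ltn_trans lt lt2)); rewrite ltnn.
have h0n := muD_nu e.
have := size_nu iota kappa P d1; rewrite hk => sz.
move: e; rewrite (size1_eq sz h0n hn1) => /eqP; rewrite muD_held -muH_held => /eqP e.
by move: ph; rewrite /prefH e => /(ltn_trans lt); rewrite ltnn.
Qed.
End Suff.


Definition rkL (T : finType) (L : seq T) (o : option T) : nat :=
  match o with None => size L | Some y => if y \in L then index y L else (size L).+1 + enum_rank y end.

Lemma big_nlt n k : (n.+1 + k < n) = false. Proof. lia. Qed.
Lemma big_neq n k m : m <= n -> (n.+1 + k = m) -> False. Proof. lia. Qed.

Lemma rkL_inj (T : finType) (L : seq T) : injective (rkL L).
Proof.
move=> [x|] [y|] //=.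
- case: ifP => xL; case: ifP => yL.
  + by move=> e; rewrite -(nth_index x xL) e nth_index.
  + by move=> e; move: (index_mem x L); rewrite xL e big_nlt.
  + by move=> e; move: (index_mem y L); rewrite yL -e big_nlt.
  + by move/addnI => /ord_inj/enum_rank_inj ->.
- case: ifP => xL; first by move=> e; move: (index_mem x L); rewrite xL e ltnn.
  by move=> e; exfalso; apply: (big_neq (leqnn _) e).
- case: ifP => yL; first by move=> e; move: (index_mem y L); rewrite yL -e ltnn.
  by move=> e; exfalso; apply: (big_neq (leqnn _) (esym e)).
Qed.

Lemma rkL_lt_size (T : finType) (L : seq T) y : (rkL L (Some y) < size L) = (y \in L).
Proof. by rewrite /=; case: ifP => yL; rewrite ?index_mem ?yL // big_nlt. Qed.

Lemma count_better_le (T : finType) (L : seq T) x s : x \in L -> uniq s ->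
  count (fun y => rkL L (Some y) < rkL L (Some x)) s <= index x L.
Proof.
move=> xL us; rewrite -size_filter.
apply: leq_trans (_ : size (take (index x L) L) <= _); last by rewrite size_take_min geq_minl.
apply: uniq_leq_size; first by rewrite filter_uniq.
move=> y; rewrite mem_filter /= xL => /andP[lt _].
have yL : y \in L.
  apply/negPn/negP => /negbTE yL; move: lt; rewrite yL.
  by have := index_size x L; move=> h1 h2; move: (leq_trans h2 h1); rewrite big_nlt.
by rewrite in_take //; move: lt => /=; rewrite yL.
Qed.

Section MkP.
Variables (D H : finType) (LH : H -> seq D) (LD : D -> seq H).
Definition mkP : profile D H := Profile (fun h => @rkL_inj _ (LH h)) (fun d => @rkL_inj _ (LD d)).
Lemma rkH_mkP h : rkH mkP h = rkL (LH h). Proof. by []. Qed.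
Lemma rkD_mkP d : rkD mkP d = rkL (LD d). Proof. by []. Qed.
Lemma accH_mkP h d : accH mkP h d = (d \in LH h).
Proof. by rewrite /accH /prefH rkH_mkP rkL_lt_size. Qed.
Lemma accD_mkP d h : accD mkP d h = (h \in LD d).
Proof. by rewrite /accD /prefD rkD_mkP rkL_lt_size. Qed.
End MkP.


Section TypeA.
Variables (D H : finType) (iota : H -> nat) (kappa : D -> nat).
Variables (d0 : D) (h0 : H) (gs : seq H) (es : seq D).
Hypotheses (ugs : uniq gs) (ues : uniq es) (sgs : size gs = kappa d0) (ses : size es = kappa d0)
  (h0gs : h0 \notin gs) (d0es : d0 \notin es)
  (igs : forall g, g \in gs -> 1 < iota g) (kes : forall e, e \in es -> 0 < kappa e).

Definition pe g := nth d0 es (index g gs).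
Definition pg e := nth h0 gs (index e es).
Definition LHA h := if h == h0 then [:: d0] else if h \in gs then [:: pe h; d0] else [::].
Definition LDA d := if d == d0 then rcons gs h0 else if d \in es then [:: pg d] else [::].
Definition PA := mkP LHA LDA.

Local Notation nu := (interview_nu iota kappa PA).
Local Notation muD := (final_muD iota kappa PA).
Local Notation muH := (final_muH iota kappa PA).

Lemma pe_es g : g \in gs -> pe g \in es.
Proof. by move=> gg; rewrite /pe mem_nth // ses -sgs index_mem. Qed.
Lemma pe_d0 g : g \in gs -> pe g != d0.
Proof. by move=> gg; apply: contraNneq d0es => <-; apply: pe_es. Qed.
Lemma pg_pe g : g \in gs -> pg (pe g) = g.
Proof. by move=> gg; rewrite /pg /pe index_uniq ?nth_index // ses -sgs index_mem. Qed.
Lemma gs_h0 g : g \in gs -> g != h0.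
Proof. by move=> gg; apply: contraNneq h0gs => <-. Qed.
Lemma LHA_g g : g \in gs -> LHA g = [:: pe g; d0].
Proof. by move=> gg; rewrite /LHA (negbTE (gs_h0 gg)) gg. Qed.
Lemma LDA_e g : g \in gs -> LDA (pe g) = [:: g].
Proof. by move=> gg; rewrite /LDA (negbTE (pe_d0 gg)) pe_es // pg_pe. Qed.

Lemma A1 g : g \in gs -> g \in nu d0.
Proof.
move=> gg.
have nR : (g, d0) \notin R1 iota kappa PA.
  apply/negP => hR.
  have ac : accD PA d0 g by rewrite accD_mkP /LDA eqxx mem_rcons inE gg orbT.
  have := inv1 hR ac; rewrite rkD_mkP.
  have := count_better_le (x := g) (L := LDA d0) (s := nu d0).
  rewrite /LDA eqxx mem_rcons inE gg orbT uniq_nu => /(_ isT isT) c1 c2.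
  have := leq_trans c2 c1; rewrite -cats1 index_cat gg -sgs leqNgt index_mem gg //.
rewrite nu_prop1 mem_prop1 nR accH_mkP LHA_g // !inE eqxx orbT /=.
apply: leq_ltn_trans (count_better_le (L := LHA g) (x := d0) _ (uniq_LA1 _ _ _ _)) _.
  by rewrite LHA_g // !inE eqxx orbT.
by apply: leq_trans (igs gg); rewrite LHA_g //= eqxx; case: (pe g == d0).
Qed.

Lemma A2 : h0 \notin nu d0.
Proof.
apply/negP => hn.
have : size (h0 :: gs) <= size (nu d0).
  apply: uniq_leq_size; first by rewrite /= h0gs ugs.
  by move=> x; rewrite inE => /orP[/eqP->//|]; apply: A1.
by rewrite /= sgs ltnNge size_nu.
Qed.

Lemma A3 x : h0 \in nu x -> x = d0.
Proof. by case/nu_acc => _; rewrite accH_mkP /LHA eqxx inE => /eqP. Qed.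

Lemma A4 g : g \in gs -> g \in nu (pe g).
Proof.
move=> gg; set e := pe g.
have nR : (g, e) \notin R1 iota kappa PA.
  apply/negP => hR.
  have ac : accD PA e g by rewrite accD_mkP LDA_e // inE.
  have := inv1 hR ac; rewrite rkD_mkP.
  have := count_better_le (x := g) (L := LDA e) (s := nu e).
  rewrite LDA_e // inE eqxx uniq_nu /= eqxx => /(_ isT isT); rewrite leqn0 => /eqP->.
  by rewrite leqn0 => /eqP ek; move: (kes (pe_es gg)); rewrite -/e ek.
rewrite nu_prop1 mem_prop1 nR accH_mkP LHA_g // !inE eqxx /=.
apply: leq_ltn_trans (count_better_le (L := LHA g) (x := e) _ (uniq_LA1 _ _ _ _)) _.
  by rewrite LHA_g // !inE eqxx.
by apply: leq_trans (igs gg); rewrite LHA_g //= eqxx.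
Qed.

Lemma muH_h0 : muH h0 = None.
Proof.
case e: (muH h0) => [x|//]; have := muH_nu e => /[dup] hn /A3 ex.
by move: hn; rewrite ex (negbTE A2).
Qed.

Lemma muD_d0 : muD d0 = None.
Proof.
case e: (muD d0) => [h|//].
have hn := muD_nu e.
have hg : h \in gs.
  have [a _] := nu_acc hn; move: a; rewrite accD_mkP /LDA eqxx mem_rcons inE.
  case/orP => [/eqP eh|//]; by move: hn; rewrite eh (negbTE A2).
have en := A4 hg.
case: (S2 en) => [[x [ex lt]]|[h1 [e1 _]]].
  by move: lt; rewrite /PA rkH_mkP LHA_g //= mem_head eqxx ltn0.
have h1n := muD_nu e1; have [a _] := nu_acc h1n.
move: a; rewrite accD_mkP LDA_e // inE => /eqP eh1.
rewrite eh1 in e1; have := muD_inj e1 e => ed.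
by move: (pe_d0 hg); rewrite ed eqxx.
Qed.

Lemma typeA : ~ adequate iota kappa PA.
Proof.
apply; exists d0, h0; rewrite muD_d0 muH_h0.
rewrite -/(accD PA d0 h0) -/(accH PA h0 d0) accD_mkP accH_mkP.
by rewrite /LDA /LHA !eqxx mem_rcons !mem_head.
Qed.
End TypeA.


Section TypeB.
Variables (D H : finType) (iota : H -> nat) (kappa : D -> nat).
Variables (h0 : H) (d1 : D) (fs : seq D) (cs : seq H).
Hypotheses (ufs : uniq fs) (ucs : uniq cs) (sfs : size fs = iota h0) (scs : size cs = iota h0)
  (d1fs : d1 \notin fs) (h0cs : h0 \notin cs)
  (kfs : forall f, f \in fs -> 1 < kappa f) (ics : forall c, c \in cs -> 0 < iota c).

Definition pc f := nth h0 cs (index f fs).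
Definition pf c := nth d1 fs (index c cs).
Definition LHB h := if h == h0 then rcons fs d1 else if h \in cs then [:: pf h] else [::].
Definition LDB d := if d == d1 then [:: h0] else if d \in fs then [:: pc d; h0] else [::].
Definition PB := mkP LHB LDB.

Local Notation nu := (interview_nu iota kappa PB).
Local Notation muD := (final_muD iota kappa PB).
Local Notation muH := (final_muH iota kappa PB).

Lemma pc_cs f : f \in fs -> pc f \in cs.
Proof. by move=> ff; rewrite /pc mem_nth // scs -sfs index_mem. Qed.
Lemma pc_h0 f : f \in fs -> pc f != h0.
Proof. by move=> ff; apply: contraNneq h0cs => <-; apply: pc_cs. Qed.
Lemma pf_pc f : f \in fs -> pf (pc f) = f.
Proof. by move=> ff; rewrite /pf /pc index_uniq ?nth_index // scs -sfs index_mem. Qed.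
Lemma fs_d1 f : f \in fs -> f != d1.
Proof. by move=> ff; apply: contraNneq d1fs => <-. Qed.
Lemma LDB_f f : f \in fs -> LDB f = [:: pc f; h0].
Proof. by move=> ff; rewrite /LDB (negbTE (fs_d1 ff)) ff. Qed.
Lemma LHB_c f : f \in fs -> LHB (pc f) = [:: f].
Proof. by move=> ff; rewrite /LHB (negbTE (pc_h0 ff)) pc_cs // pf_pc. Qed.

Lemma B1 f : f \in fs -> pc f \in nu f.
Proof.
move=> ff.
have nR : (pc f, f) \notin R1 iota kappa PB.
  apply/negP => hR.
  have ac : accD PB f (pc f) by rewrite accD_mkP LDB_f // mem_head.
  have := inv1 hR ac; rewrite /PB rkD_mkP.
  have := count_better_le (x := pc f) (L := LDB f) (s := nu f).
  rewrite LDB_f // mem_head uniq_nu /= eqxx => /(_ isT isT); rewrite leqn0 => /eqP->.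
  by rewrite leqn0 => /eqP ek; move: (kfs ff); rewrite ek.
rewrite nu_prop1 mem_prop1 nR accH_mkP LHB_c // mem_head /=.
apply: leq_ltn_trans (count_better_le (L := LHB (pc f)) (x := f) _ (uniq_LA1 _ _ _ _)) _.
  by rewrite LHB_c // mem_head.
by apply: leq_trans (ics (pc_cs ff)); rewrite LHB_c //= eqxx.
Qed.

Lemma B2 f : f \in fs -> (h0, f) \notin R1 iota kappa PB.
Proof.
move=> ff; apply/negP => hR.
have ac : accD PB f h0 by rewrite accD_mkP LDB_f // !inE eqxx orbT.
have := inv1 hR ac; rewrite /PB rkD_mkP.
have := count_better_le (x := h0) (L := LDB f) (s := nu f).
rewrite LDB_f // !inE eqxx orbT uniq_nu => /(_ isT isT) c1 c2.
have := leq_trans c2 c1; rewrite /= (negbTE (pc_h0 ff)) eqxx => k1.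
by move: (kfs ff); rewrite ltnNge k1.
Qed.

Lemma B3 : d1 \notin (prop1 iota kappa PB h0).
Proof.
rewrite mem_prop1 negb_and; apply/orP; right; rewrite negb_and; apply/orP; right.
rewrite -leqNgt -sfs -size_filter; apply: uniq_leq_size => // f ff.
rewrite mem_filter mem_LA1 B2 // accH_mkP /LHB eqxx mem_rcons inE ff orbT andbT /=.
rewrite andbT /LHB eqxx !mem_rcons mem_head in_cons ff orbT.
rewrite -!cats1 !index_cat ff (negbTE d1fs) /= eqxx addn0 index_mem //.
Qed.

Lemma nu_d1 h : h \notin nu d1.
Proof.
apply/negP => hn; have [a _] := nu_acc hn.
move: a; rewrite accD_mkP /LDB eqxx inE => /eqP eh.
by move: hn; rewrite eh nu_prop1 (negbTE B3).
Qed.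

Lemma muD_d1 : muD d1 = None.
Proof. by case e: (muD d1) => [h|//]; move: (muD_nu e); rewrite (negbTE (nu_d1 h)). Qed.

Lemma muH_h0B : muH h0 = None.
Proof.
case e: (muH h0) => [x|//].
have hn := muH_nu e; have [_ a] := nu_acc hn.
have xf : x \in fs.
  move: a; rewrite accH_mkP /LHB eqxx mem_rcons inE => /orP[/eqP ex|//].
  by move: hn; rewrite ex (negbTE (nu_d1 _)).
have cn := B1 xf.
case: (S2 cn) => [[y [ey lt]]|[h1 [e1 le]]].
  by move: lt; rewrite /PB rkH_mkP LHB_c //= mem_head eqxx ltn0.
have : muD x = Some h0 by apply/eqP; rewrite muD_held -muH_held e.
rewrite e1 => -[eh]; move: le; rewrite eh /PB rkD_mkP LDB_f //=.
by rewrite mem_head !inE !eqxx orbT (negbTE (pc_h0 xf)).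
Qed.

Lemma typeB : ~ adequate iota kappa PB.
Proof.
apply; exists d1, h0; rewrite muD_d1 muH_h0B.
rewrite -/(accD PB d1 h0) -/(accH PB h0 d1) accD_mkP accH_mkP.
by rewrite /LDB /LHB !eqxx mem_rcons !mem_head.
Qed.
End TypeB.


Lemma take_enum_props (T : finType) (p : pred T) k : k <= #|[pred x | p x]| ->
  let s := take k (enum [pred x | p x]) in
  [/\ uniq s, size s = k & forall x, x \in s -> p x].
Proof.
move=> hk s; split.
- by rewrite take_uniq // enum_uniq.
- by rewrite size_takel // -cardE.
- by move=> x /mem_take; rewrite mem_enum inE.
Qed.

Lemma exists_notin (T : finType) (s : seq T) : size s < #|T| -> exists x, x \notin s.
Proof.
move=> hs; case: (pickP [pred x | x \notin s]) => [x xs|none]; first by exists x.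
have : #|T| <= #|s|.
  by apply: subset_leq_card; apply/subsetP => x _; move: (none x) => /= /negbFE.
have := card_size s; lia.
Qed.

Section Nec.
Variables (D H : finType) (iota : H -> nat) (kappa : D -> nat).

Lemma typeA_ex d0 : kappa d0 <= #|[pred h | 1 < iota h]| -> kappa d0 < #|H| ->
  kappa d0 <= #|[pred d | (d != d0) && (0 < kappa d)]| -> ~ globally_adequate iota kappa.
Proof.
move=> h1 h2 h3 GA.
have [ugs sgs igs] := take_enum_props h1.
have [ues ses kes] := take_enum_props h3.
set gs := take _ _ in ugs sgs igs; set es := take _ _ in ues ses kes.
have [h0 h0gs] : exists h0, h0 \notin gs by apply: exists_notin; rewrite sgs.
have d0es : d0 \notin es by apply/negP => /kes; rewrite eqxx.
apply: (@typeA D H iota kappa d0 h0 gs es) => //.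
- by move=> e /kes /andP[].
Qed.

Lemma typeB_ex h0 : iota h0 <= #|[pred d | 1 < kappa d]| -> iota h0 < #|D| ->
  iota h0 <= #|[pred h | (h != h0) && (0 < iota h)]| -> ~ globally_adequate iota kappa.
Proof.
move=> h1 h2 h3 GA.
have [ufs sfs kfs] := take_enum_props h1.
have [ucs scs ics] := take_enum_props h3.
set fs := take _ _ in ufs sfs kfs; set cs := take _ _ in ucs scs ics.
have [d1 d1fs] : exists d1, d1 \notin fs by apply: exists_notin; rewrite sfs.
have h0cs : h0 \notin cs by apply/negP => /ics; rewrite eqxx.
apply: (@typeB D H iota kappa h0 d1 fs cs) => //.
- by move=> c /ics /andP[].
Qed.
End Nec.


Lemma card_all (T : finType) (p : pred T) : (forall x, p x) -> #|[pred x | p x]| = #|T|.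
Proof.
move=> hp; apply/eqP; rewrite eqn_leq max_card /=.
by apply: subset_leq_card; apply/subsetP => x _; rewrite inE hp.
Qed.

Lemma card_allC1 (T : finType) (p : pred T) (x0 : T) : (forall x, p x) ->
  #|[pred x | (x != x0) && p x]| = #|T|.-1.
Proof. by move=> hp; rewrite -(cardC1 x0); apply: eq_card => x; rewrite !inE hp andbT. Qed.

Lemma card_ge1 (T : finType) (p : pred T) x : p x -> 1 <= #|[pred x | p x]|.
Proof. by move=> px; apply/card_gt0P; exists x. Qed.

Unset Implicit Arguments.

Theorem proposition1 (D H : finType) (iota : H -> nat) (kappa : D -> nat) :
  1 < #|D| -> 1 < #|H| ->
  globally_adequate iota kappa <->
  ((forall d, kappa d = 1) /\ (forall h, iota h = 1)) \/
  ((forall d, minn #|D| #|H| <= kappa d) /\ (forall h, minn #|D| #|H| <= iota h)).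
Proof.
move=> hD hH; split; last first.
  case=> [[hk hi]|[hk hi]] P; first exact: suff_1.
  case: (leqP #|D| #|H|) => c.
    by apply: suff_a => [d|h]; [move: (hk d)|move: (hi h)]; rewrite (minn_idPl c).
  by apply: suff_b => [d|h]; [move: (hk d)|move: (hi h)]; rewrite (minn_idPr (ltnW c)).
move=> GA; set n := minn #|D| #|H|.
have n2 : 1 < n by rewrite leq_min hD hH.
have nD : n <= #|D| by rewrite geq_minl.
have nH : n <= #|H| by rewrite geq_minr.
have Z1 : forall d, 0 < kappa d.
  move=> d; rewrite lt0n; apply/negP => /eqP k0; apply: (@typeA_ex D H iota kappa d) => //; rewrite k0 //.
  lia.
have Z2 : forall h, 0 < iota h.
  move=> h; rewrite lt0n; apply/negP => /eqP k0; apply: (@typeB_ex D H iota kappa h) => //; rewrite k0 //.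
  lia.
case: (boolP ([forall d, kappa d == 1] && [forall h, iota h == 1])).
  by case/andP => /forallP h1 /forallP h2; left; split => x; apply/eqP.
move=> N1.
case: (boolP ([forall d, n <= kappa d] && [forall h, n <= iota h])).
  by case/andP => /forallP h1 /forallP h2; right; split.
rewrite negb_and => /orP N2; exfalso.
case: (boolP [exists d, kappa d < n]) => [/existsP [d kd]|].
  case: (boolP [forall h, 1 < iota h]) => [/forallP hall|].
    apply: (@typeA_ex D H iota kappa d) => //.
    - by rewrite card_all //; lia.
    - lia.
    - by rewrite card_allC1 //; lia.
  rewrite negb_forall => /existsP [h]; rewrite -leqNgt => ih.
  have ih1 : iota h = 1 by have := Z2 h; lia.
  case: (boolP [exists d', 1 < kappa d']) => [/existsP [d' kd']|].
    apply: (@typeB_ex D H iota kappa h) => //; rewrite ih1.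
    - exact: card_ge1 kd'.
    - lia.
    - by rewrite card_allC1 //; lia.
  rewrite negb_exists => /forallP kall.
  have k1 : forall x, kappa x = 1 by move=> x; have := Z1 x; have := kall x; lia.
  move: N1; rewrite negb_and => /orP [N|N].
    by move/negP: N; apply; apply/forallP => x; rewrite k1.
  rewrite negb_forall in N; case/existsP: N => h' ih'.
  have ih2 : 1 < iota h' by have := Z2 h'; lia.
  apply: (@typeA_ex D H iota kappa d) => //; rewrite k1.
  - exact: card_ge1 ih2.
  - lia.
  - by rewrite card_allC1 //; lia.
rewrite negb_exists => /forallP kall.
have kall' : forall d, n <= kappa d by move=> d; have := kall d; lia.
case: N2 => N2; first by move/forallP: N2.
rewrite negb_forall in N2; case/existsP: N2 => h; rewrite -ltnNge => ih.
apply: (@typeB_ex D H iota kappa h) => //.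
- by rewrite card_all //; [lia | move=> x; have := kall' x; lia].
- lia.
- by rewrite card_allC1 //; lia.
Qed.
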